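(* Let $a,b$ be positive integers (neither assumed prime or square-free). Let $f$ be a reduced form of discriminant $-4a^2b$ whose class in $C(-4a^2b)$ is derived from the class of $e_{-4b}=(1,0,b)$ in $C(-4b)$, and suppose $f$ is not equivalent to $(1,0,a^2b)$. Among the positive divisors $a_2$ of $a$ such that the class of $f$ is derived from the class of $(1,0,(a/a_2)^2b)$ in $C(-4(a/a_2)^2b)$, choose one for which $b_2=(a/a_2)^2b$ is maximal. If $b_2>a_2^2$, then \[ f=(a_2^2,\;2a_2k,\;k^2+b_2) \] for some integer $k$ with $-a_2/2\le k\le a_2/2$.
   Context: A binary quadratic form $(a,b,c)$ means $ax^2+bxy+cy^2$ with integer coefficients and discriminant $b^2-4ac$; primitive means $\gcd(a,b,c)=1$. Two forms are equivalent if one is obtained from the other by an integer substitution of determinant $1$. A form $(a,b,c)$ of negative discriminant is reduced if $|b|\le a\le c$, and $b\ge0$ whenever $|b|=a$ or $a=c$; every positive definite form is equivalent to a unique reduced form. For $\Delta<0$, $C(\Delta)$ is the class group of equivalence classes of primitive positive definite forms of discriminant $\Delta$ under composition. For a positive integer $s$, a class $f\in C(\Delta s^2)$ is derived from a class $g\in C(\Delta)$ if there exist a representative $g_0$ of $g$ and an integer matrix $\begin{pmatrix}\alpha&\beta\\ \gamma&\delta\end{pmatrix}$ of determinant $s$ such that the form $g_0(\alpha x+\beta y,\gamma x+\delta y)$ lies in the class $f$. *)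

(* Defs.v *)
From mathcomp Require Import all_boot all_order all_algebra.
Set Implicit Arguments. Unset Strict Implicit. Unset Printing Implicit Defensive.
Import Order.TTheory GRing.Theory Num.Theory.
Local Open Scope ring_scope.

(* A binary quadratic bqf (a,b,c) = a x^2 + b x y + c y^2 with integer coefficients. *)
Definition bqf := (int * int * int)%type.

Definition fa (f : bqf) : int := f.1.1.
Definition fb (f : bqf) : int := f.1.2.
Definition fc (f : bqf) : int := f.2.

Definition mkform (a b c : int) : bqf := (a, b, c).

Definition disc (f : bqf) : int := fb f ^+ 2 - 4 * fa f * fc f.

Definition primitive (f : bqf) : Prop :=
  gcdz (gcdz (fa f) (fb f)) (fc f) = 1.

Definition pos_def (f : bqf) : Prop := disc f < 0 /\ 0 < fa f.

(* The bqf g(al x + be y, ga x + de y). *)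
Definition subst (g : bqf) (al be ga de : int) : bqf :=
  mkform (fa g * al ^+ 2 + fb g * al * ga + fc g * ga ^+ 2)
         (2 * fa g * al * be + fb g * (al * de + be * ga) + 2 * fc g * ga * de)
         (fa g * be ^+ 2 + fb g * be * de + fc g * de ^+ 2).

Definition equiv (g f : bqf) : Prop :=
  exists al be ga de : int, al * de - be * ga = 1 /\ subst g al be ga de = f.

Definition reduced (f : bqf) : Prop :=
  [/\ `|fb f| <= fa f, fa f <= fc f &
      ((`|fb f| = fa f \/ fa f = fc f) -> 0 <= fb f)].

Definition derived (f g : bqf) (s : int) : Prop :=
  exists g0 : bqf, equiv g g0 /\
    exists al be ga de : int, al * de - be * ga = s /\ equiv (subst g0 al be ga de) f.

(* Main.v *)
From mathcomp Require Import all_boot all_order all_algebra.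
From mathcomp Require Import ring lra zify.
Require Import Defs.
Import Order.TTheory GRing.Theory Num.Theory.
Local Open Scope ring_scope.

Definition ev (g : bqf) (x y : int) : int := fa g * x ^+ 2 + fb g * x * y + fc g * y ^+ 2.

Lemma subst_comp g a1 b1 c1 d1 a2 b2 c2 d2 :
  subst (subst g a1 b1 c1 d1) a2 b2 c2 d2 =
  subst g (a1*a2+b1*c2) (a1*b2+b1*d2) (c1*a2+d1*c2) (c1*b2+d1*d2).
Proof. case: g => [[A B] C]; rewrite /subst /mkform /fa /fb /fc /=; congr (_,_,_); ring. Qed.

Lemma ev_subst g al be ga de x y :
  ev (subst g al be ga de) x y = ev g (al*x+be*y) (ga*x+de*y).
Proof. case: g => [[A B] C]; rewrite /ev /subst /mkform /fa /fb /fc /=; ring. Qed.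

Lemma sq_pos (x y : int) : (x != 0) || (y != 0) -> 1 <= x ^+ 2 - `|x| * `|y| + y ^+ 2.
Proof.
move=> H; rewrite -[x ^+ 2]real_normK ?num_real // -[y ^+ 2]real_normK ?num_real //; have hx := normr_ge0 x; have hy := normr_ge0 y.
rewrite !expr2.
case: (eqVneq x 0) H => [->|nx] /= H.
  rewrite normr0; have : 0 < `|y| by rewrite normr_gt0.
  move=> /[dup] ?; have : 1 <= `|y| by lia. nra.
have : 0 < `|x| by rewrite normr_gt0.
  move=> /[dup] ?; have : 1 <= `|x| by lia.
case: (eqVneq y 0) => [->|ny]; first by rewrite normr0; nra.
have : 0 < `|y| by rewrite normr_gt0.
  move=> /[dup] ?; have : 1 <= `|y| by lia. nra.
Qed.

Lemma reduced_min f x y : reduced f -> (x != 0) || (y != 0) -> fa f <= ev f x y.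
Proof.
case: f => [[A B] C]; rewrite /reduced /ev /fa /fb /fc /= => -[h1 h2 _] H.
have := sq_pos x y H.
have hb : - (`|B| * `|x * y|) <= B * x * y.
  by rewrite -mulrA -normrM lerNl; apply: le_trans (ler_norm _) _; rewrite normrN.
have hxy : `|x*y| = `|x| * `|y| by rewrite normrM.
have := normr_ge0 (x*y). have := normr_ge0 B.
have hxx : x ^+ 2 = `|x| ^+ 2 by rewrite real_normK ?num_real.
nra.
Qed.

Lemma sq_ge1 (K : int) : K != 0 -> 1 <= K ^+ 2.
Proof.
move=> nK; rewrite -real_normK ?num_real //.
have : 0 < `|K| by rewrite normr_gt0.
move=> h; have h1 : 1 <= `|K| by lia.
nra.
Qed.

Lemma core (f : bqf) (b2 a2 al be ga de u1 u2 u3 u4 : int) :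
  reduced f -> 0 < a2 -> a2 ^+ 2 < b2 -> al * de - be * ga = a2 ->
  gcdz ga de = 1 -> u1 * u4 - u2 * u3 = 1 ->
  f = subst (subst (mkform 1 0 b2) al be ga de) u1 u2 u3 u4 -> fa f = a2 ^+ 2.
Proof.
move=> red a2p lt dN g1 dU ef.
have evE : forall x y, ev f x y = (al * (u1*x+u2*y) + be * (u3*x+u4*y)) ^+ 2
   + b2 * (ga * (u1*x+u2*y) + de * (u3*x+u4*y)) ^+ 2.
  move=> x y; rewrite ef !ev_subst /ev /fa /fb /fc /mkform /=; ring.
have fa1 : fa f = ev f 1 0 by rewrite /ev; ring.
have hf : fa f <= a2 ^+ 2.
  set X := u4 * de + u2 * ga; set Y := - u3 * de - u1 * ga.
  have eX : u1 * X + u2 * Y = de.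
    have -> : u1 * X + u2 * Y = (u1 * u4 - u2 * u3) * de by rewrite /X /Y; ring.
    by rewrite dU mul1r.
  have eY : u3 * X + u4 * Y = - ga.
    have -> : u3 * X + u4 * Y = - ((u1 * u4 - u2 * u3) * ga) by rewrite /X /Y; ring.
    by rewrite dU mul1r.
  have nz : (X != 0) || (Y != 0).
    rewrite -negb_and; apply/negP => /andP [/eqP X0 /eqP Y0].
    move: eX eY; rewrite X0 Y0 !mulr0 addr0 => de0 /eqP; rewrite eq_sym oppr_eq0 => /eqP ga0.
    by move: dN; rewrite -de0 ga0 !mulr0 subr0 => a20; rewrite -a20 ltxx in a2p.
  have := reduced_min f X Y red nz; rewrite evE eX eY.
  have -> : al * de + be * - ga = a2 by rewrite -dN; ring.
  have -> : ga * de + de * - ga = 0 by ring.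
  by rewrite expr0n /= mulr0 addr0.
apply/le_anti/andP; split => //.
rewrite fa1 evE !mulr1 !mulr0 !addr0.
set U := al * u1 + be * u3; set W := ga * u1 + de * u3.
case: (eqVneq W 0) => [W0|Wn]; last first.
  have := sq_ge1 W Wn; have := sqr_ge0 U.
  move=> h1 h2; have b2p : 0 < b2 by apply: le_lt_trans lt; exact: sqr_ge0.
  have : b2 <= b2 * W ^+ 2 by rewrite ler_pMr.
  lra.
rewrite W0 expr0n /= mulr0 addr0.
case: (Bezoutz ga de) => s [t st]; rewrite g1 in st.
have hx : a2 * u1 = de * U.
  have -> : a2 * u1 = de * U - be * W by rewrite -dN /U /W; ring.
  by rewrite W0 mulr0 subr0.
have hy : a2 * u3 = - (ga * U).
  have -> : a2 * u3 = al * W - ga * U by rewrite -dN /U /W; ring.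
  by rewrite W0 mulr0 sub0r.
have hU : U = a2 * (t * u1 - s * u3).
  have -> : a2 * (t * u1 - s * u3) = t * (a2 * u1) - s * (a2 * u3) by ring.
  rewrite hx hy; have -> : t * (de * U) - s * - (ga * U) = U * (s * ga + t * de) by ring.
  by rewrite st mulr1.
have Kn : t * u1 - s * u3 != 0.
  apply/negP => /eqP K0; move: hU; rewrite K0 mulr0 => U0.
  move: hx hy; rewrite U0 !mulr0 oppr0 => /eqP; rewrite mulf_eq0 (gt_eqF a2p) /= => /eqP u10.
  move/eqP; rewrite mulf_eq0 (gt_eqF a2p) /= => /eqP u30.
  by move: dU; rewrite u10 u30 mul0r mulr0 subr0 => /eqP; rewrite eq_sym oner_eq0.
have := sq_ge1 _ Kn; rewrite hU exprMn.
have := sqr_ge0 a2. nra.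
Qed.

Lemma shape (f : bqf) (a2 b2 : int) : reduced f -> 0 < a2 ->
  disc f = - 4 * (a2 ^+ 2 * b2) -> fa f = a2 ^+ 2 ->
  exists k : int, - a2 <= 2 * k /\ 2 * k <= a2 /\
    f = mkform (a2 ^+ 2) (2 * a2 * k) (k ^+ 2 + b2).
Proof.
case: f => [[A B] C]; rewrite /reduced /disc /fa /fb /fc /= => -[h1 _ _] a2p dsc eA.
subst A.
have dv : (2 * a2 %| B)%Z.
  have : ((2 * a2) ^+ 2 %| B ^+ 2)%Z.
    apply/dvdzP; exists (C - b2).
    have -> : B ^+ 2 = B ^+ 2 - 4 * a2 ^+ 2 * C + 4 * a2 ^+ 2 * C by ring.
    rewrite dsc; ring.
  by rewrite !dvdzE !abszX dvdn_pexp2r.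
set k := (B %/ (2 * a2))%Z.
have eB : B = 2 * a2 * k by rewrite mulrC /k divzK.
exists k.
have eC : C = k ^+ 2 + b2.
  have : 4 * a2 ^+ 2 * (C - (k ^+ 2 + b2)) = 0.
    have -> : 4 * a2 ^+ 2 * (C - (k ^+ 2 + b2)) = - (B ^+ 2 - 4 * a2 ^+ 2 * C) + B ^+ 2 - 4 * a2 ^+ 2 * (k ^+ 2 + b2) by ring.
    rewrite dsc eB; ring.
  move/eqP; rewrite mulf_eq0 mulf_eq0 expf_eq0 (gt_eqF a2p) /= subr_eq0 => /eqP //.
have hb : - (a2 ^+ 2) <= 2 * a2 * k <= a2 ^+ 2 by rewrite -ler_norml -eB.
case/andP: hb => hb1 hb2.
split; first nra. split; first nra.
by rewrite eB eC.
Qed.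

Lemma PoszX2 (n : nat) : ((n ^ 2)%N)%:Z = (n%:Z) ^+ 2.
Proof. by rewrite -natz natrX natz. Qed.

Theorem propositionA2 (a b : nat) (f : bqf) (a2 : nat) :
  (0 < a)%N -> (0 < b)%N ->
  primitive f -> reduced f -> disc f = - 4 * (a ^ 2 * b)%:Z ->
  derived f (mkform 1 0 b%:Z) a%:Z ->
  ~ equiv f (mkform 1 0 (a ^ 2 * b)%:Z) ->
  (0 < a2)%N -> (a2 %| a)%N ->
  derived f (mkform 1 0 ((a %/ a2) ^ 2 * b)%:Z) a2%:Z ->
  (forall a2' : nat, (0 < a2')%N -> (a2' %| a)%N ->
     derived f (mkform 1 0 ((a %/ a2') ^ 2 * b)%:Z) a2'%:Z ->
     ((a %/ a2') ^ 2 * b <= (a %/ a2) ^ 2 * b)%N) ->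
  (a2 ^ 2 < (a %/ a2) ^ 2 * b)%N ->
  exists k : int,
    - a2%:Z <= 2 * k /\ 2 * k <= a2%:Z /\
    f = mkform (a2 ^ 2)%:Z (2 * a2%:Z * k) (k ^+ 2 + ((a %/ a2) ^ 2 * b)%:Z).
Proof.
move=> a0 b0 _ red dsc _ _ a20 a2a der maxi lt.
have ac : a = (a2 * (a %/ a2))%N by rewrite mulnC divnK.
set c := (a %/ a2)%N in ac der maxi lt *.
have c0 : (0 < c)%N by move: a0; rewrite ac muln_gt0 => /andP [].
case: der => g0 [[v1 [v2 [v3 [v4 [dV eg0]]]]] [m1 [m2 [m3 [m4 [dM [u1 [u2 [u3 [u4 [dU ef]]]]]]]]]]].
rewrite -eg0 (subst_comp (mkform _ _ _) v1) in ef.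
set al := v1 * m1 + v2 * m3 in ef; set be := v1 * m2 + v2 * m4 in ef.
set ga := v3 * m1 + v4 * m3 in ef; set de := v3 * m2 + v4 * m4 in ef.
have dN : al * de - be * ga = a2%:Z.
  have -> : al * de - be * ga = (v1 * v4 - v2 * v3) * (m1 * m4 - m2 * m3) by rewrite /al /be /ga /de; ring.
  by rewrite dV dM mul1r.
have a2p : 0 < a2%:Z by [].
have g1 : gcdz ga de = 1.
  rewrite /gcdz; set tn := gcdn `|ga| `|de|.
  case: (eqVneq tn 1%N) => [-> //|tn1]; exfalso.
  have dg : (tn%:Z %| ga)%Z := dvdz_gcdl ga de.
  have dd : (tn%:Z %| de)%Z := dvdz_gcdr ga de.
  set g' := (ga %/ tn)%Z; set d' := (de %/ tn)%Z.
  have eg : ga = g' * tn by rewrite /g' divzK.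
  have ed : de = d' * tn by rewrite /d' divzK.
  have tn0 : (0 < tn)%N.
    rewrite lt0n; apply/negP => /eqP t0.
    by move: dN; rewrite eg ed t0 !mulr0 subrr => a20'; rewrite -a20' ltxx in a2p.
  set q := al * d' - be * g'.
  have eq : a2%:Z = q * tn by rewrite -dN eg ed /q; ring.
  have tnp : 0 < tn%:Z by [].
  have qp : 0 < q by rewrite -(pmulr_lgt0 _ tnp) -eq.
  set qn := `|q|%N.
  have eqn : q = qn%:Z by rewrite /qn gez0_abs ?ltW.
  have a2n : a2 = (qn * tn)%N by apply/eqP; rewrite -eqz_nat PoszM -eqn -eq.
  have qn0 : (0 < qn)%N by move: a20; rewrite a2n muln_gt0 => /andP[].
  have dq : (a %/ qn = tn * c)%N by rewrite ac a2n -mulnA mulKn.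
  have := maxi qn qn0.
  have -> : (qn %| a)%N by rewrite ac a2n -mulnA dvdn_mulr.
  have hd : derived f (mkform 1 0 ((a %/ qn) ^ 2 * b)%N) qn.
    exists (mkform 1 0 ((a%/qn)^2*b)%N); split.
      exists 1, 0, 0, 1; split; first by [].
      rewrite /subst /mkform /fa /fb /fc /=; congr (_,_,_); ring.
    exists al, be, g', d'; split; first by rewrite -eqn.
    exists u1, u2, u3, u4; split => //; rewrite -ef; congr subst.
    rewrite /subst /mkform /fa /fb /fc /= dq eg ed; congr (_,_,_); rewrite !PoszM; ring.
  move=> /(_ isT hd); rewrite dq.
  have t2 : (2 <= tn)%N by rewrite ltn_neqAle eq_sym tn1 tn0.
  rewrite expnMn -mulnA -{2}[(c ^ 2 * b)%N]mul1n leq_pmul2r; last first.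
    by rewrite muln_gt0 expn_gt0 c0 b0.
  have : (4 <= tn ^ 2)%N by rewrite -[4%N]/(2 ^ 2)%N leq_exp2r.
  lia.
have ltZ : a2%:Z ^+ 2 < ((c ^ 2 * b)%N)%:Z by rewrite -PoszX2 ltz_nat.
have fa2 := core f _ _ _ _ _ _ _ _ _ _ red a2p ltZ dN g1 dU (esym ef).
rewrite PoszX2.
apply: shape => //.
rewrite dsc ac; congr (_ * _); rewrite !PoszM; ring.
Qed.
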